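(* Let $\kappa > 1$ and let $x_1 = \dfrac{\sqrt{2}}{\sqrt{(\kappa-1)(\pi(\kappa-1)+2)}}$. Then for every $x \geq x_1$, \[ \kappa x\, R(x) \geq 1. \]
   Context: $Q$ denotes the Gaussian $Q$-function, $Q(x) = \frac{1}{\sqrt{2\pi}}\int_x^\infty e^{-t^2/2}\,dt$, and for $x \geq 0$, $R(x) = \sqrt{2\pi}\, Q(x)\, e^{x^2/2}$ (the Mills' ratio). *)

(* Defs.v *)
From Stdlib Require Import Reals Lra.
Open Scope R_scope.

Definition gauss (t : R) : R := exp (- (t * t) / 2).

Definition tail_integral (x I : R) : Prop :=
  exists pr : forall b : R, x <= b -> Riemann_integrable gauss x b,
    forall eps : R, eps > 0 ->
      exists M : R, forall b (hb : x <= b), b >= M ->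
        Rabs (RiemannInt (pr b hb) - I) < eps.

(* Q(x) = (1/sqrt(2 pi)) * int_x^infty exp(-t^2/2) dt, given the tail integral I. *)
Definition Qval (I : R) : R := I / sqrt (2 * PI).

Definition Mills (x I : R) : R := sqrt (2 * PI) * Qval I * exp (x * x / 2).

(* Main.v *)
Require Import Defs.
From Stdlib Require Import Reals.
From Stdlib Require Import Lra.
From Coquelicot Require Import Coquelicot.
Open Scope R_scope.

Lemma exp_le x y : x <= y -> exp x <= exp y.
Proof. intros [H|H]. left; apply exp_increasing; auto. subst; lra. Qed.

Lemma gauss_cont t : continuous gauss t.
Proof. apply (@ex_derive_continuous R_AbsRing R_NormedModule). unfold gauss. auto_derive. exact I. Qed.

Lemma exRc (f : R -> R) a b : (forall z, continuous f z) -> ex_RInt f a b.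
Proof. intros H. apply (@ex_RInt_continuous R_CompleteNormedModule). intros; apply H. Qed.

Lemma exRc' (f : R -> R) a b : a <= b -> (forall z, a <= z <= b -> continuous f z) -> ex_RInt f a b.
Proof. intros Hab H. apply (@ex_RInt_continuous R_CompleteNormedModule). intros z Hz. apply H.
  rewrite Rmin_left in Hz by lra. rewrite Rmax_right in Hz by lra. exact Hz. Qed.

Lemma RInt_scalR (f : R -> R) a b k : ex_RInt f a b -> RInt (fun t => k * f t) a b = k * RInt f a b.
Proof. intros H. exact (@RInt_scal R_CompleteNormedModule f a b k H). Qed.

Lemma RInt_extR (f g : R -> R) a b : (forall x, f x = g x) -> RInt f a b = RInt g a b.
Proof. intros H. apply RInt_ext. intros; apply H. Qed.

Lemma gauss_exRInt a b : ex_RInt gauss a b.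
Proof. apply exRc. intros; apply gauss_cont. Qed.
Definition kf (u t : R) := exp (-(u*u*(1+t*t))/2) / (1+t*t).
Definition dk (u t : R) := - u * exp (-(u*u*(1+t*t))/2).
Definition Gf (u : R) := RInt (fun t => kf u t) 0 1.
Definition Jf (u : R) := RInt gauss 0 u.

Lemma opt_pos t : 0 < 1 + t*t. Proof. nra. Qed.

Lemma kf_der u t : is_derive (fun z => kf z t) u (dk u t).
Proof. pose proof (opt_pos t). unfold kf, dk. auto_derive. exact I. unfold Rdiv. field. lra. Qed.

Lemma Derive_kf u t : Derive (fun z => kf z t) u = dk u t.
Proof. apply is_derive_unique, kf_der. Qed.

Lemma kf_cont u t : continuous (kf u) t.
Proof. pose proof (opt_pos t). apply (@ex_derive_continuous R_AbsRing R_NormedModule). unfold kf. auto_derive. lra. Qed.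

Lemma dk_cont2 x t : continuity_2d_pt (fun u v => Derive (fun z => kf z v) u) x t.
Proof.
  apply continuity_2d_pt_ext with (f := fun u v => - (u * exp (- / 2 * (u * u * (1 + v * v))))).
  { intros u v. rewrite Derive_kf. unfold dk. f_equal. ring_simplify. f_equal. f_equal. field. }
  apply continuity_2d_pt_opp. apply continuity_2d_pt_mult. apply continuity_2d_pt_id1.
  apply continuity_1d_2d_pt_comp. apply derivable_continuous_pt, derivable_pt_exp.
  apply continuity_2d_pt_mult. apply continuity_2d_pt_const.
  apply continuity_2d_pt_mult. apply continuity_2d_pt_mult; apply continuity_2d_pt_id1.
  apply continuity_2d_pt_plus. apply continuity_2d_pt_const.
  apply continuity_2d_pt_mult; apply continuity_2d_pt_id2.
Qed.

Lemma comp_lin x : x * RInt (fun t => gauss (x*t)) 0 1 = Jf x.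
Proof.
  unfold Jf.
  assert (H := RInt_comp_lin gauss x 0 0 1 (gauss_exRInt _ _)).
  replace (x*0+0) with 0 in H by ring. replace (x*1+0) with x in H by ring.
  rewrite <- H. rewrite RInt_scal. unfold scal; simpl; unfold mult; simpl. f_equal. apply RInt_ext. intros. f_equal. ring.
  apply exRc. intros. apply (@ex_derive_continuous R_AbsRing R_NormedModule). unfold gauss. auto_derive. exact I.
Qed.

Lemma Gf_der x : is_derive Gf x (- gauss x * Jf x).
Proof.
  assert (H : is_derive Gf x (RInt (fun t => Derive (fun u => kf u t) x) 0 1)).
  { unfold Gf. apply (is_derive_RInt_param kf 0 1 x).
    - apply filter_forall. intros x0 t _. eexists. apply kf_der.
    - intros t _. apply dk_cont2.
    - apply filter_forall. intros y. apply exRc. intros; apply kf_cont. }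
  replace (- gauss x * Jf x) with (RInt (fun t => Derive (fun u => kf u t) x) 0 1). exact H.
  rewrite <- comp_lin.
  transitivity (RInt (fun t => (- x * gauss x) * (gauss (x*t))) 0 1).
  apply RInt_ext. intros t _. rewrite Derive_kf. unfold dk, gauss.
  rewrite (Rmult_assoc (-x)), <- exp_plus. f_equal. f_equal. field.
  transitivity ((-x * gauss x) * RInt (fun t => gauss (x*t)) 0 1). 2: (change (- x * gauss x * RInt (fun t => gauss (x * t)) 0 1 = - gauss x * (x * RInt (fun t => gauss (x * t)) 0 1) :> R); ring).
  apply RInt_scalR.
  apply exRc. intros. apply (@ex_derive_continuous R_AbsRing R_NormedModule). unfold gauss. auto_derive. exact I.
Qed.

Lemma Jf_der x : is_derive Jf x (gauss x).
Proof.
  apply (@is_derive_RInt R_CompleteNormedModule gauss Jf 0 x).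
  - apply filter_forall. intros b. unfold Jf. apply (@RInt_correct R_CompleteNormedModule). apply gauss_exRInt.
  - apply gauss_cont.
Qed.

Definition Hf (u : R) := Jf u ^ 2 + 2 * Gf u.

Lemma Hf_der x : is_derive Hf x 0.
Proof.
  assert (H1 := is_derive_pow Jf 2 x _ (Jf_der x)).
  assert (H2 := is_derive_scal Gf x 2 _ (Gf_der x)).
  assert (H3 := @is_derive_plus R_AbsRing R_NormedModule _ _ x _ _ H1 H2).
  unfold Hf. replace 0 with (plus (INR 2 * gauss x * Jf x ^ Init.Nat.pred 2) (2 * (- gauss x * Jf x))).
  exact H3.
  change (INR 2 * gauss x * Jf x ^ Init.Nat.pred 2 + 2 * (- gauss x * Jf x) = 0 :> R). simpl. ring.
Qed.

Lemma Hf_const x : Hf x = Hf 0.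
Proof.
  destruct (Req_dec x 0) as [->|Hx]. reflexivity.
  destruct (Rlt_or_le 0 x) as [Hp|Hn].
  - destruct (MVT_cor2 Hf (fun _ => 0) 0 x Hp) as [c [Hc _]].
    intros c _. apply is_derive_Reals, Hf_der. lra.
  - destruct (MVT_cor2 Hf (fun _ => 0) x 0) as [c [Hc _]]. lra.
    intros c _. apply is_derive_Reals, Hf_der. lra.
Qed.

Lemma Gf0 : Gf 0 = PI / 4.
Proof.
  unfold Gf. rewrite <- atan_1.
  transitivity (RInt (fun t => / (1 + t^2)) 0 1).
  apply RInt_ext. intros t _. unfold kf. replace (- (0*0*(1+t*t))/2) with 0 by field. rewrite exp_0. unfold Rdiv. rewrite Rmult_1_l. simpl. rewrite Rmult_1_r. reflexivity.
  replace (atan 1) with (atan 1 - atan 0) by (rewrite atan_0; ring).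
  apply (@is_RInt_unique R_CompleteNormedModule).
  apply (@is_RInt_derive R_CompleteNormedModule atan).
  - intros t _. apply is_derive_Reals, derivable_pt_lim_atan.
  - intros t _. apply (@ex_derive_continuous R_AbsRing R_NormedModule). auto_derive. nra.
Qed.

Lemma Hf0 : Hf 0 = PI / 2.
Proof. unfold Hf. rewrite Gf0. unfold Jf. rewrite RInt_point. unfold zero; simpl. field. Qed.

Lemma Gf_le u : Gf u <= gauss u.
Proof.
  unfold Gf. replace (gauss u) with (RInt (fun _ => gauss u) 0 1).
  apply RInt_le. lra. apply exRc. intros; apply kf_cont. apply exRc. intros. apply continuous_const.
  intros t Ht. unfold kf, gauss. pose proof (opt_pos t).
  assert (exp (- (u * u * (1 + t * t)) / 2) <= exp (- (u * u) / 2)). apply exp_le. nra.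
  apply (Rmult_le_reg_r (1 + t*t)). lra. unfold Rdiv. rewrite Rmult_assoc, Rinv_l. 2: lra.
  pose proof (exp_pos (- (u * u) / 2)). nra.
  rewrite RInt_const. unfold scal; simpl; unfold mult; simpl. ring.
Qed.

Lemma Jf_sq_ge b : Jf b ^ 2 >= PI / 2 - 2 * gauss b.
Proof. pose proof (Hf_const b). rewrite Hf0 in H. unfold Hf in H. pose proof (Gf_le b). lra. Qed.
Lemma gauss_pos t : 0 < gauss t. Proof. apply exp_pos. Qed.

Definition sq (t:R) := sqrt (t*t + 2*PI).
Definition Dn (t:R) := (PI-1)*t + sq t.
Definition P (t:R) := PI / Dn t * gauss t.
Definition dP (t:R) := - PI * gauss t * (t * Dn t + (PI - 1) + t / sq t) / (Dn t)^2.
Definition Mf (t:R) := (PI-4)*(t + sq t)^2 + 2*PI*(PI-2).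
Lemma PI_gt3 : 3 < PI. Proof. pose proof PI2_3_2. lra. Qed.
Lemma sq_pos t : 0 < sq t.
Proof. unfold sq. apply sqrt_lt_R0. pose proof PI_RGT_0. nra. Qed.
Lemma sq_sq t : sq t * sq t = t*t + 2*PI.
Proof. unfold sq. apply sqrt_sqrt. pose proof PI_RGT_0. nra. Qed.
Lemma Dn_pos t : 0 <= t -> 0 < Dn t.
Proof. intros. unfold Dn. pose proof (sq_pos t). pose proof PI_gt3. nra. Qed.

Lemma P_deriv t : 0 <= t -> is_derive P t (dP t).
Proof. intros Ht. pose proof (Dn_pos t Ht) as Hd. pose proof (sq_pos t) as Hs. unfold P, dP. unfold Dn, sq, gauss in *. auto_derive.
 - split. pose proof PI_RGT_0. nra. split. lra. exact I.
 - unfold Rdiv. field. lra.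
Qed.

Lemma dP_cont t : 0 <= t -> continuous dP t.
Proof. intros Ht. apply (@ex_derive_continuous R_AbsRing R_NormedModule). pose proof (Dn_pos t Ht) as Hd. pose proof (sq_pos t) as Hs. unfold dP. unfold Dn, sq, gauss in *. auto_derive.
 repeat split; try lra; pose proof PI_RGT_0; nra.

Qed.

Lemma negdP_cont t : 0 <= t -> continuous (fun t => - dP t) t.
Proof. intros Ht. apply (@ex_derive_continuous R_AbsRing R_NormedModule). pose proof (Dn_pos t Ht) as Hd. pose proof (sq_pos t) as Hs. unfold dP. unfold Dn, sq, gauss in *. auto_derive.
 repeat split; try lra; pose proof PI_RGT_0; nra.
Qed.

Lemma idN (t s p : R) : s*s = t*t+2*p ->
  (s+t)^3 * (p*t*((p - 1)*t+s)*s+p*((p - 1)*s+t)-((p - 1)*t+s)^2*s) = p^2*((p-4)*(t+s)^2+2*p*(p-2)).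
Proof. intros H.
 transitivity (p^2*((p-4)*(t+s)^2+2*p*(p-2)) + (s*s - t*t - 2*p) *
  ((-1)*s*s*s*s + (-1)*s*s*s*t*p + (-1)*s*s*s*t + (-2)*s*s*t*t*p + (1)*s*s*t*t + (1)*s*s*p*p + (-3)*s*s*p + (-1)*s*t*t*t*p + (1)*s*t*t*t + (1)*s*t*p*p + (-4)*s*t*p + (-1)*t*t*p + (1)*p*p*p + (-2)*p*p)).
 ring. rewrite H. ring. Qed.

Lemma dP_diff t : 0 <= t ->
  - dP t - gauss t = gauss t * (PI^2 * Mf t) / (sq t * Dn t ^ 2 * (sq t + t)^3).
Proof. intros Ht. pose proof (Dn_pos t Ht) as Hd. pose proof (sq_pos t) as Hs.
 unfold Mf. rewrite <- (idN t (sq t) PI (sq_sq t)).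
 unfold dP, Dn in *. field. repeat split; lra.
Qed.

Lemma dP_le t : 0 <= t -> Mf t <= 0 -> - dP t <= gauss t.
Proof. intros Ht HM. pose proof (dP_diff t Ht). pose proof (Dn_pos t Ht) as Hd. pose proof (sq_pos t) as Hs.
 pose proof (gauss_pos t).
 assert (gauss t * (PI ^ 2 * Mf t) / (sq t * Dn t ^ 2 * (sq t + t) ^ 3) <= 0).
 { unfold Rdiv. apply Rmult_le_0_r. apply Rmult_le_0_l. lra. pose proof PI_RGT_0. nra.
   apply Rlt_le, Rinv_0_lt_compat. apply Rmult_lt_0_compat. apply Rmult_lt_0_compat. lra. apply pow_lt; lra. apply pow_lt; lra. }
 lra.
Qed.

Lemma dP_ge t : 0 <= t -> 0 <= Mf t -> gauss t <= - dP t.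
Proof. intros Ht HM. pose proof (dP_diff t Ht). pose proof (Dn_pos t Ht) as Hd. pose proof (sq_pos t) as Hs.
 pose proof (gauss_pos t).
 assert (0 <= gauss t * (PI ^ 2 * Mf t) / (sq t * Dn t ^ 2 * (sq t + t) ^ 3)).
 { unfold Rdiv. apply Rmult_le_pos. apply Rmult_le_pos. lra. pose proof PI_RGT_0. nra.
   apply Rlt_le, Rinv_0_lt_compat. apply Rmult_lt_0_compat. apply Rmult_lt_0_compat. lra. apply pow_lt; lra. apply pow_lt; lra. }
 lra.
Qed.

Lemma RInt_negdP a b : 0 <= a -> a <= b -> RInt (fun t => - dP t) a b = P a - P b.
Proof.
  intros Ha Hab.
  assert (HI : is_RInt dP a b (minus (P b) (P a))).
  { apply (@is_RInt_derive R_CompleteNormedModule P dP).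
    - intros t Ht. rewrite Rmin_left in Ht by lra. apply P_deriv. lra.
    - intros t Ht. rewrite Rmin_left in Ht by lra. apply dP_cont. lra. }
  assert (Hex : ex_RInt dP a b) by (eexists; exact HI).
  transitivity (RInt (fun t => -1 * dP t) a b). apply RInt_extR. intros; ring.
  rewrite RInt_scalR by exact Hex.
  rewrite (@is_RInt_unique R_CompleteNormedModule _ _ _ _ HI).
  change (-1 * (P b - P a) = P a - P b :> R). ring.
Qed.

Lemma sq_mono a t : 0 <= a <= t -> sq a <= sq t.
Proof. intros H. unfold sq. apply sqrt_le_1_alt. nra. Qed.

Lemma Mf_mono a t : 0 <= a <= t -> Mf t <= Mf a.
Proof. intros H. unfold Mf. pose proof (sq_mono a t H). pose proof (sq_pos a). pose proof PI_4.
  assert ((a + sq a)^2 <= (t + sq t)^2) by nra. nra. Qed.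

Lemma gauss_ge_dP a b : 0 <= a -> a <= b -> Mf a <= 0 -> P a - P b <= RInt gauss a b.
Proof.
  intros Ha Hab HM. rewrite <- RInt_negdP by lra.
  apply RInt_le. lra.
  apply exRc'. lra. intros z Hz. apply negdP_cont. lra.
  apply gauss_exRInt.
  intros t Ht. apply dP_le. lra. pose proof (Mf_mono a t). lra.
Qed.

Lemma Jx_le x : 0 <= x -> 0 <= Mf x -> RInt gauss 0 x <= P 0 - P x.
Proof.
  intros Hx HM. rewrite <- RInt_negdP by lra.
  apply RInt_le. lra. apply gauss_exRInt.
  apply exRc'. lra. intros z Hz. apply negdP_cont. lra.
  intros t Ht. apply dP_ge. lra. pose proof (Mf_mono t x). lra.
Qed.

Lemma tail_ge x I c : tail_integral x I ->
  (forall eps, eps > 0 -> exists M, forall b, x <= b -> b >= M -> RInt gauss x b >= c - eps) ->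
  I >= c.
Proof.
  intros [pr Hpr] H. destruct (Rge_or_gt I c) as [h|h]. exact h. exfalso.
  set (e := (c - I)/2).
  destruct (Hpr e) as [M1 HM1]. unfold e; lra.
  destruct (H e) as [M2 HM2]. unfold e; lra.
  set (b := Rmax x (Rmax M1 M2)).
  assert (hb : x <= b) by apply Rmax_l.
  assert (b >= M1). { unfold b. pose proof (Rmax_r x (Rmax M1 M2)). pose proof (Rmax_l M1 M2). lra. }
  assert (b >= M2). { unfold b. pose proof (Rmax_r x (Rmax M1 M2)). pose proof (Rmax_r M1 M2). lra. }
  specialize (HM1 b hb H0). specialize (HM2 b hb H1).
  rewrite <- RInt_Reals in HM1.
  apply Rabs_def2 in HM1. unfold e in *. lra.
Qed.

Lemma gauss_small eps : eps > 0 -> exists M, forall b, b >= M -> gauss b <= eps.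
Proof.
  intros He. exists (/eps + 1). intros b Hb.
  pose proof (Rinv_0_lt_compat eps He).
  assert (Hb0 : 0 < b) by lra.
  assert (E : gauss b * exp (b*b/2) = 1).
  { unfold gauss. rewrite <- exp_plus. replace (- (b * b) / 2 + b * b / 2) with 0 by field. apply exp_0. }
  pose proof (exp_ineq1_le (b*b/2)).
  assert (b <= exp (b*b/2)) by nra.
  pose proof (gauss_pos b).
  assert (gauss b * b <= 1) by nra.
  assert (b * eps >= 1). { apply Rle_ge. apply (Rmult_le_reg_r (/eps)). auto.
    rewrite Rmult_assoc, Rinv_r by lra. lra. }
  nra.
Qed.

Lemma P_le2 b : 0 <= b -> P b <= 2 * gauss b.
Proof.
  intros Hb. unfold P. pose proof (Dn_pos b Hb). pose proof (gauss_pos b).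
  assert (2 <= sq b). { pose proof (sq_sq b). pose proof (sq_pos b). pose proof PI_gt3. nra. }
  assert (sq b <= Dn b). { unfold Dn. pose proof PI_gt3. nra. }
  assert (PI / Dn b <= 2). { apply (Rmult_le_reg_r (Dn b)). lra. unfold Rdiv. rewrite Rmult_assoc, Rinv_l by lra. pose proof PI_4. lra. }
  nra.
Qed.

Lemma P0_sq : P 0 * P 0 = PI / 2 /\ 0 < P 0.
Proof.
  unfold P. unfold gauss. replace (- (0*0)/2) with 0 by field. rewrite exp_0.
  unfold Dn. replace ((PI - 1) * 0 + sq 0) with (sq 0) by ring.
  pose proof (sq_sq 0). pose proof (sq_pos 0). pose proof PI_RGT_0. split.
  replace (PI / sq 0 * 1 * (PI / sq 0 * 1)) with (PI * PI / (sq 0 * sq 0)) by (field; lra).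
  rewrite H. field. lra.
  rewrite Rmult_1_r. apply Rdiv_lt_0_compat; lra.
Qed.

Lemma Jf_ge0 b : 0 <= b -> 0 <= Jf b.
Proof. intros Hb. unfold Jf. apply RInt_ge_0. auto. apply gauss_exRInt. intros. left. apply gauss_pos. Qed.

Lemma Jf_big eps : eps > 0 -> exists M, forall b, 0 <= b -> b >= M -> Jf b >= P 0 - eps.
Proof.
  intros He. destruct P0_sq as [H0 H0p].
  destruct (gauss_small (eps * P 0 / 2)) as [M HM]. apply Rmult_lt_0_compat. nra. lra.
  exists M. intros b Hb HbM. specialize (HM b HbM). pose proof (Jf_sq_ge b). pose proof (Jf_ge0 b Hb).
  destruct (Rle_or_lt (P 0) eps). lra.
  destruct (Rge_or_gt (Jf b) (P 0 - eps)) as [h|h]. exact h. exfalso.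
  assert (Jf b * Jf b < (P 0 - eps) * (P 0 - eps)) by nra.
  simpl in H. nra.
Qed.

Lemma key x I : 0 <= x -> tail_integral x I -> I >= P x.
Proof.
  intros Hx HI. apply (tail_ge x I (P x) HI). intros eps He.
  destruct (Rle_or_lt (Mf x) 0) as [HM|HM].
  - destruct (gauss_small (eps/2)) as [M HMb]. lra.
    exists M. intros b Hxb HbM. pose proof (gauss_ge_dP x b Hx Hxb HM). pose proof (P_le2 b). specialize (HMb b HbM). lra.
  - destruct (Jf_big eps He) as [M HJ]. exists M. intros b Hxb HbM.
    pose proof (Jx_le x Hx (Rlt_le _ _ HM)). specialize (HJ b ltac:(lra) HbM).
    assert (C : plus (RInt gauss 0 x) (RInt gauss x b) = RInt gauss 0 b)
      by (apply (@RInt_Chasles R_CompleteNormedModule); apply gauss_exRInt).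
    change (RInt gauss 0 x + RInt gauss x b = RInt gauss 0 b) in C.
    unfold Jf in HJ. lra.
Qed.

Theorem lemma2 (kappa : R) (hk : kappa > 1) (x I : R)
  (hx : x >= sqrt 2 / sqrt ((kappa - 1) * (PI * (kappa - 1) + 2)))
  (hI : tail_integral x I) :
  kappa * x * Mills x I >= 1.
Proof.
  pose proof PI_gt3 as Hpi.
  set (Q := (kappa - 1) * (PI * (kappa - 1) + 2)) in hx.
  assert (HQ : 0 < Q) by (unfold Q; apply Rmult_lt_0_compat; nra).
  pose proof (sqrt_lt_R0 Q HQ) as HsQ.
  pose proof (sqrt_sqrt Q (Rlt_le _ _ HQ)) as HsQ2.
  assert (Hs2 : 0 < sqrt 2) by (apply sqrt_lt_R0; lra).
  pose proof (sqrt_sqrt 2 ltac:(lra)) as Hs22.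
  assert (Hx1 : x * sqrt Q >= sqrt 2).
  { apply Rle_ge. apply Rge_le in hx. apply (Rmult_le_compat_r (sqrt Q)) in hx. 2: lra.
    unfold Rdiv in hx. rewrite Rmult_assoc, Rinv_l in hx by lra. lra. }
  assert (Hx0 : 0 < x) by nra.
  assert (HxQ : x * x * Q >= 2) by nra.
  assert (HM : Mills x I = I * exp (x * x / 2)).
  { unfold Mills, Qval. assert (0 < sqrt (2*PI)) by (apply sqrt_lt_R0; lra). field. lra. }
  rewrite HM.
  pose proof (key x I (Rlt_le _ _ Hx0) hI) as Hk.
  assert (E : gauss x * exp (x*x/2) = 1).
  { unfold gauss. rewrite <- exp_plus. replace (- (x * x) / 2 + x * x / 2) with 0 by field. apply exp_0. }
  pose proof (exp_pos (x*x/2)) as Hex.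
  assert (HIe : I * exp (x*x/2) >= PI / Dn x).
  { unfold P in Hk. apply Rle_ge. apply Rge_le in Hk. apply (Rmult_le_compat_r (exp (x*x/2))) in Hk. 2: lra.
    rewrite Rmult_assoc, E, Rmult_1_r in Hk. exact Hk. }
  pose proof (Dn_pos x (Rlt_le _ _ Hx0)) as HD.
  assert (HL : kappa * x * PI >= Dn x).
  { unfold Dn. pose proof (sq_sq x) as Hs. pose proof (sq_pos x).
    set (L := ((kappa - 1) * PI + 1) * x).
    assert (0 <= L) by (unfold L; apply Rmult_le_pos; nra).
    assert (L * L >= sq x * sq x).
    { rewrite Hs. replace (L * L) with (PI * (x * x * Q) + x * x) by (unfold L, Q; ring).
      assert (PI * (x * x * Q) >= PI * 2) by (apply Rmult_ge_compat_l; lra). lra. }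
    assert (HLs : L >= sq x) by nra.
    unfold L in HLs. replace (kappa*x*PI) with (((kappa - 1) * PI + 1) * x + (PI-1)*x) by ring. lra. }
  assert (kappa * x * (PI / Dn x) >= 1).
  { unfold Rdiv. apply Rle_ge. apply (Rmult_le_reg_r (Dn x)). lra.
    replace (kappa * x * (PI * / Dn x) * Dn x) with (kappa*x*PI) by (field; lra). lra. }
  assert (0 < kappa * x) by nra.
  nra.
Qed.
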